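(* Let $-1<a<0$ and $\mathbf{g}\in\mathbb{R}^m$. There is a unique $c\in\mathbb{R}$ (with $g_i + c > 0$ for all $i$) such that $\sum_{i=1}^m (g_i+c)^{1/a} = 1$. Furthermore, let $\mathbf{v}\in\Delta^m$ with all $v_i>0$, and $\kappa\ge 0$. Then: (i) if $g_i \le v_i^a + \kappa$ for all $i$, then $c\ge-\kappa$; (ii) if $g_i \ge v_i^a - \frac{\kappa}{v_i}$ for all $i$, then $c \le \frac{\kappa}{\min_i v_i}$; and if, furthermore, $\kappa \le a^2 v_i^{a+1}$ for all $i$, then $c\le m\kappa$.
   Context: $\Delta^m$ is the probability simplex in $\mathbb{R}^m$. *)

(* Defs.v *)
From HB Require Import structures.
From mathcomp Require Import all_boot all_order all_algebra.
From mathcomp Require Import all_classical all_reals all_analysis.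
Set Implicit Arguments. Unset Strict Implicit. Unset Printing Implicit Defensive.
Import Order.TTheory GRing.Theory Num.Theory.
Local Open Scope ring_scope.
Local Open Scope classical_set_scope.

Definition in_simplex (R : realType) (m : nat) (v : 'I_m -> R) : Prop :=
  (forall i, 0 <= v i) /\ \sum_(i < m) v i = 1.

(* min_i v_i, as the infimum of the (finite, nonempty when m > 0) range. *)
Definition vmin (R : realType) (m : nat) (v : 'I_m -> R) : R := inf (range v).

(* Main.v *)
Require Import Defs.
From HB Require Import structures.
From mathcomp Require Import all_boot all_order all_algebra.
From mathcomp Require Import all_classical all_reals all_analysis.
From mathcomp Require Import ring lra.
Import Order.TTheory GRing.Theory Num.Theory.
Local Open Scope ring_scope.

Section H.
Variable R : realType.

Lemma bern (e y : R) : 0 < e < 1 -> 0 <= y -> y `^ e <= 1 + e * (y - 1).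
Proof.
move=> /andP[e0 e1] y0.
have h := @conjugate_powR R (y `^ e) 1 e^-1 (1 - e)^-1 (powR_ge0 _ _) ler01.
have e0' : 0 < e^-1 by rewrite invr_gt0.
have e1' : 0 < (1 - e)^-1 by rewrite invr_gt0 subr_gt0.
have := h e0' e1'; rewrite !invrK addrC subrK => /(_ erefl).
rewrite mulr1 -powRrM mulfV ?gt_eqF // powRr1 // powR1 => H.
by apply: (le_trans H); lra.
Qed.

Lemma powR_ltN (p x y : R) : p < 0 -> 0 < x -> x < y -> y `^ p < x `^ p.
Proof.
move=> p0 x0 xy.
have y0 : 0 < y by apply: (lt_trans x0 xy).
have [q -> q0] : exists2 q, p = - q & 0 < q by exists (- p); rewrite ?opprK ?oppr_gt0.
rewrite !powRN ltf_pV2 ?posrE ?powR_gt0 //.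
by apply: gt0_ltr_powR => //; rewrite nnegrE ltW.
Qed.

Lemma powR_leN (p x y : R) : p < 0 -> 0 < x -> x <= y -> y `^ p <= x `^ p.
Proof.
move=> p0 x0; rewrite le_eqVlt => /predU1P[->//|xy].
exact/ltW/powR_ltN.
Qed.

Lemma powR_invK (a v : R) : a != 0 -> 0 <= v -> (v `^ a) `^ (a^-1) = v.
Proof. by move=> a0 v0; rewrite -powRrM mulfV // powRr1. Qed.


Lemma key (a k v M : R) : -1 < a -> a < 0 -> 0 < v -> 0 <= k -> 0 < M ->
  k <= a ^+ 2 * v `^ (a + 1) -> k * M `^ (a + 1) <= a ^+ 2 ->
  (0 < v `^ a - k / v + M * k) /\
  (v `^ a - k / v + M * k) `^ (a^-1) <= v + a^-1 * k * M `^ a * (M * v - 1).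
Proof.
move=> a1 a0 v0 k0 M0 hk1 hk2.
set A := v `^ a; set Ma := M `^ a.
have A0 : 0 < A by rewrite powR_gt0.
have Ma0 : 0 < Ma by rewrite powR_gt0.
have vA : v `^ (a + 1) = A * v.
  by rewrite powRD ?powRr1 ?ltW //; apply/implyP => _; rewrite gt_eqF.
have MA : M `^ (a + 1) = Ma * M.
  by rewrite powRD ?powRr1 ?ltW //; apply/implyP => _; rewrite gt_eqF.
rewrite vA in hk1; rewrite MA in hk2.
set t := M * v.
have t0 : 0 < t by rewrite mulr_gt0.
have TE : t `^ a = Ma * A by rewrite powRM ?ltW.
set D := M * k - k / v.
set x := D / A.
have LE : A - k / v + M * k = A * (1 + x).
  by rewrite /x /D mulrDr mulr1 mulrCA mulfV ?gt_eqF // mulr1; lra.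
have kv : k / v <= a ^+ 2 * A.
  by rewrite ler_pdivrMr // -mulrA.
have x1 : - a ^+ 2 <= x.
  rewrite /x ler_pdivlMr // /D; have : 0 <= M * k by rewrite mulr_ge0 // ltW.
  nra.
have a21 : a ^+ 2 < 1 by nra.
have x1' : 0 < 1 + x by lra.
split; first by rewrite LE mulr_gt0.
rewrite LE (powRM _ (ltW A0) (ltW x1')) (@powR_invK a v (negbT (lt_eqF a0)) (ltW v0)).
have na0 : 0 < - a by rewrite oppr_gt0.
set W := x / (- a).
have W1 : 0 < 1 + W.
  have : -1 < W by rewrite /W ltr_pdivlMr //; nra.
  lra.
have a1' : 0 < - a < 1 by apply/andP; split => //; lra.
set X := (1 + x) `^ (- a^-1).
have X0 : 0 <= X by apply: powR_ge0.
have XE : X `^ (- a) = 1 + x.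
  by rewrite /X -powRrM mulrNN mulVf ?lt_eqF // powRr1 // ltW.
have WX : 1 + W <= X.
  have := @bern (- a) X a1' X0; rewrite XE => h.
  have : W <= X - 1 by rewrite /W ler_pdivrMr //; lra.
  lra.
have XW : (1 + x) `^ a^-1 <= (1 + W)^-1.
  have -> : a^-1 = - (- a^-1) by rewrite opprK.
  rewrite powRN -/X lef_pV2 // posrE; first by lra.
apply: (le_trans (ler_wpM2l (ltW v0) XW)).
set T := Ma * A.
have T0 : 0 < T by rewrite mulr_gt0.
set S := W * T.
have E2 : (- a) * v * S = k * Ma * (t - 1).
  rewrite /S /W /T /x /D /t; field.
  by rewrite (lt_eqF a0) !gt_eqF.
have E1 : a^-1 * k * Ma * (t - 1) = - v * S.
  rewrite /S /W /T /x /D /t; field.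
  by rewrite (lt_eqF a0) !gt_eqF.
have E3 : W * (- a) * A = k * (t - 1) / v.
  rewrite /W /x /D /t; field.
  by rewrite (lt_eqF a0) !gt_eqF.
have key : 0 <= W * (1 - T - S).
  have [t1|t1] := leP 1 t.
  - have W0 : 0 <= W.
      have : 0 <= W * (- a) * A by rewrite E3; apply: divr_ge0; [apply: mulr_ge0 => //; lra | lra].
      by rewrite -mulrA (pmulr_lge0 _ (mulr_gt0 na0 A0)).
    have tp : t `^ (1 + a) = T * t.
      rewrite powRD; last by apply/implyP => _; rewrite gt_eqF.
      by rewrite powRr1 ?TE 1?mulrC // ltW.
    have b1 : 0 < 1 + a < 1 by apply/andP; split; lra.
    have hb := @bern (1 + a) t b1 (ltW t0); rewrite tp in hb.
    have h1 : (- a) * t * S <= a ^+ 2 * (t - 1).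
      have -> : (- a) * t * S = (k * Ma * M) * (t - 1).
        have -> : (- a) * t * S = M * ((- a) * v * S) by rewrite /t; ring.
        by rewrite E2; ring.
      apply: ler_wpM2r; first lra.
      by rewrite -mulrA.
    have h2 : S <= 1 - T.
      have ht : 0 < (- a) * t by rewrite mulr_gt0.
      rewrite -(ler_pM2l ht); apply: (le_trans h1).
      have -> : (- a) * t * (1 - T) = (- a) * (t - T * t) by ring.
      have -> : a ^+ 2 * (t - 1) = (- a) * ((- a) * (t - 1)) by ring.
      apply: ler_wpM2l; lra.
    apply: mulr_ge0 => //; lra.
  - have W0 : W <= 0.
      have : W * (- a) * A <= 0.
        rewrite E3 pmulr_lle0 ?invr_gt0 //.
        apply: mulr_ge0_le0 => //; lra.
      by rewrite -mulrA (pmulr_lle0 _ (mulr_gt0 na0 A0)).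
    have tn : t `^ (- a) = T^-1 by rewrite powRN TE.
    have hb := @bern (- a) t a1' (ltW t0); rewrite tn in hb.
    have hb' : 1 <= T * (1 + (- a) * (t - 1)).
      by rewrite -ler_pdivrMl // mulr1.
    have h4 : (- a) * v * (- S) <= a ^+ 2 * T * (1 - t) * v.
      have -> : (- a) * v * (- S) = k * (Ma * (1 - t)) by rewrite mulrN E2; ring.
      have -> : a ^+ 2 * T * (1 - t) * v = a ^+ 2 * (A * v) * (Ma * (1 - t)) by rewrite /T; ring.
      apply: ler_wpM2r => //; apply: mulr_ge0; lra.
    have h1 : (- a) * (- S) <= a ^+ 2 * T * (1 - t).
      rewrite -(ler_pM2r v0); move: h4; congr (_ <= _); ring.
    have h5 : - S <= (- a) * T * (1 - t).
      rewrite -(ler_pM2l na0); apply: (le_trans h1); rewrite le_eqVlt; apply/orP; left; apply/eqP; ring.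
    have h2 : 1 - T - S <= 0.
      have e : T * (1 + (- a) * (t - 1)) = T - (- a) * T * (1 - t) by ring.
      rewrite e in hb'.
      lra.
    by rewrite mulr_le0.
have -> : v + a^-1 * k * Ma * (t - 1) = v * (1 - S) by rewrite E1; ring.
rewrite ler_pM2l // -div1r ler_pdivrMr //.
have -> : (1 - S) * (1 + W) = 1 + W * (1 - T - S) by rewrite /S; ring.
lra.
Qed.


Lemma ex_argmin m (hm : (0 < m)%N) (F : 'I_m -> R) : exists j, forall i, F j <= F i.
Proof.
case: (@arg_minP _ _ 'I_m (Ordinal hm) predT F isT) => j _ H.
by exists j => i; exact: H.
Qed.

Lemma sum_lt m (hm : (0 < m)%N) (F G : 'I_m -> R) :
  (forall i, F i < G i) -> \sum_(i < m) F i < \sum_(i < m) G i.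
Proof.
move=> h; apply: ltr_sum => // ; apply/hasP; exists (Ordinal hm) => //.
Qed.

End H.

Theorem lemma7 (R : realType) (m : nat) (hm : (0 < m)%N) (a : R)
    (ha1 : -1 < a) (ha0 : a < 0) (g : 'I_m -> R) :
  (exists! c : R, (forall i, 0 < g i + c) /\
      \sum_(i < m) (g i + c) `^ (a^-1) = 1) /\
  (forall c : R, (forall i, 0 < g i + c) ->
      \sum_(i < m) (g i + c) `^ (a^-1) = 1 ->
   forall (v : 'I_m -> R), in_simplex v -> (forall i, 0 < v i) ->
   forall kappa : R, 0 <= kappa ->
     ((forall i, g i <= v i `^ a + kappa) -> - kappa <= c) /\
     ((forall i, v i `^ a - kappa / v i <= g i) ->
        c <= kappa / vmin v /\
        ((forall i, kappa <= a ^+ 2 * v i `^ (a + 1)) -> c <= m%:R * kappa))).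
Proof.
have p0 : a^-1 < 0 by rewrite invr_lt0.
have an0 : a != 0 by rewrite lt_eqF.
have vK : forall w : R, 0 <= w -> (w `^ a) `^ (a^-1) = w.
  by move=> w w0; apply: powR_invK.
split.
  pose f := fun c => \sum_(i < m) (g i + c) `^ (a^-1).
  have [j hj] := @ex_argmin R m hm g.
  have fdec : forall c c', (forall i, 0 < g i + c) -> c < c' -> f c' < f c.
    move=> c c' hc hcc; apply: sum_lt => // i; apply: powR_ltN => //.
    by rewrite ltrD2l.
  set M := m%:R : R.
  have M0 : 0 <= M by rewrite ler0n.
  set c0 := 1 - g j; set c1 := M + 1 - g j.
  have pos : forall c, c0 <= c -> forall i, 0 < g i + c.
    by move=> c hc i; have := hj i; rewrite /c0 in hc; lra.
  have f0 : 1 <= f c0.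
    rewrite /f (bigD1 j) //=.
    have -> : g j + c0 = 1 by rewrite /c0; ring.
    rewrite powR1 /= lerDl; apply: sumr_ge0 => i _; exact: powR_ge0.
  have ap : a^-1 <= -1.
    by rewrite -(ler_nM2l ha0) mulfV // mulrN1; lra.
  have f1 : f c1 <= 1.
    have hi : forall i, (g i + c1) `^ (a^-1) <= (M + 1)^-1.
      move=> i.
      have M1 : 0 < M + 1 by lra.
      apply: (le_trans (@powR_leN R (a^-1) (M + 1) (g i + c1) p0 M1 _)).
        by have := hj i; rewrite /c1; lra.
      rewrite -(powR_inv1 (ltW M1)).
      by apply: ler_powR => //; lra.
    apply: (le_trans (ler_sum _ (fun i _ => hi i))).
    rewrite sumr_const card_ord -mulr_natl -/M ler_pdivrMr; lra.
  have [c hcin hfc] : exists2 c, c \in `[c0, c1] & f c = 1.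
    apply: IVT.
    - by rewrite /c0 /c1; lra.
    - apply: (@continuous_in_subspaceT _ _ _ f) => x hx.
      have hx0 : c0 <= x.
        by move: hx; rewrite in_setE /= in_itv /= => /andP[].
      rewrite /continuous_at /f; apply: cvg_big => //.
        exact: add_continuous.
      move=> i _.
      have hp : g i + x \in `]0, +oo[ by rewrite in_itv /= andbT pos.
      have hd : derivable (fun y : R => y `^ (a^-1)) (g i + x) 1 by apply: derivable_powR.
      have hc := differentiable_continuous ((derivable1_diffP _ _).1 hd).
      apply: (@continuous_comp _ _ _ (fun y => g i + y) (fun y : R => y `^ (a^-1)) x) => //.
      apply: cvgD; [exact: cvg_cst | exact: cvg_id].
    - by apply/andP; split; [rewrite ge_min f1 orbT | rewrite le_max f0].
  have hc0 : c0 <= c by move: hcin; rewrite in_itv /= => /andP[].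
  exists c; split; first by split => //; apply: pos.
  move=> c' [hc' hs']; apply/eqP; rewrite eq_le !leNgt; apply/andP; split; apply/negP => hlt.
  - by have := fdec _ _ hc' hlt; rewrite /f hs' -/(f c) hfc ltxx.
  - by have := fdec _ _ (pos _ hc0) hlt; rewrite /f hs' -/(f c) hfc ltxx.

move=> c hc hs v [v0 v1] vp k k0; split.
  move=> hg; rewrite leNgt; apply/negP => hlt.
  have : \sum_(i < m) v i < \sum_(i < m) (g i + c) `^ (a^-1).
    apply: sum_lt => // i.
    rewrite -{1}(vK (v i)) ?ltW //; apply: powR_ltN => //.
    have := hg i; lra.
  by rewrite v1 hs ltxx.
have [j hj] := @ex_argmin R m hm v.
have vminE : vmin v = v j.
  apply/eqP; rewrite eq_le; apply/andP; split.
    have hl : has_lbound (range v) by exists 0 => y [i _ <-]; exact: ltW.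
    by apply: (ge_inf hl); exists j.
  by apply: lb_le_inf; [exists (v j); exists j | move=> y [i _ <-]].
move=> hg; split.
  rewrite vminE leNgt; apply/negP => hlt.
  have : \sum_(i < m) (g i + c) `^ (a^-1) < \sum_(i < m) v i.
    apply: sum_lt => // i.
    rewrite -(vK (v i)) ?ltW //; apply: powR_ltN => //; first exact: powR_gt0.
    have h1 : k / v i <= k / v j.
      by apply: ler_wpM2l => //; rewrite lef_pV2 ?posrE.
    have := hg i; lra.
  by rewrite v1 hs ltxx.
move=> hk; rewrite leNgt; apply/negP => hlt.
set M := m%:R : R.
have M0 : 0 < M by rewrite ltr0n.
have Mvj : M * v j <= 1.
  have := @ler_sum _ _ (index_enum 'I_m) predT (fun _ => v j) v (fun i _ => hj i).
  by rewrite sumr_const card_ord v1 -mulr_natl.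
have hkM : k * M `^ (a + 1) <= a ^+ 2.
  apply: (le_trans (ler_wpM2r (powR_ge0 _ _) (hk j))).
  rewrite -mulrA -(powRM _ (ltW (vp j)) (ltW M0)) mulrC.
  rewrite -[leRHS]mul1r ler_wpM2r ?sqr_ge0 //.
  apply: (@le_trans _ _ (1 `^ (a + 1))); last by rewrite powR1.
  apply: ge0_ler_powR; rewrite ?nnegrE; first lra.
  - by rewrite mulr_ge0 // ltW.
  - by [].
  - by rewrite mulrC.
have key1 : forall i, 0 < v i `^ a - k / v i + M * k /\
   (v i `^ a - k / v i + M * k) `^ (a^-1) <= v i + a^-1 * k * M `^ a * (M * v i - 1).
  by move=> i; apply: key => //; apply: hk.
have : \sum_(i < m) (g i + c) `^ (a^-1) < \sum_(i < m) (v i + a^-1 * k * M `^ a * (M * v i - 1)).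
  apply: sum_lt => // i; have [L0 LL] := key1 i.
  apply: lt_le_trans LL; apply: powR_ltN => //.
  have := hg i; lra.
rewrite hs big_split /= v1 -mulr_sumr sumrB -mulr_sumr v1 sumr_const card_ord.
by rewrite -mulr_natl mulr1 subrr mulr0 addr0 ltxx.
Qed.
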